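(* Let $X$ be a Hausdorff hereditarily disconnected space. If $\mathcal{C}\subset\mathcal{K}(X)$ is connected and there exists $T\in\mathcal{C}$ that is scattered, then $|\mathcal{C}|=1$.
   Context: $\mathcal{K}(X)$ is the set of nonempty compact subsets of $X$ with the Vietoris topology (generated by $U^+=\{A: A\subset U\}$ and $U^-=\{A: A\cap U\neq\emptyset\}$ for $U$ open in $X$). A space is hereditarily disconnected if every nonempty connected subset is a singleton. A space is scattered if every nonempty subset has an isolated point (in its relative topology). *)

(* Defs.v *)
From HB Require Import structures.
From mathcomp Require Import all_boot all_order all_algebra.
From mathcomp Require Import all_classical all_reals all_analysis.
Set Implicit Arguments. Unset Strict Implicit. Unset Printing Implicit Defensive.
Local Open Scope classical_set_scope.

Definition hereditarily_disconnected (X : topologicalType) : Prop :=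
  forall A : set X, A !=set0 -> connected A -> exists x : X, A = [set x].

Definition isolated_in (X : topologicalType) (S : set X) (x : X) : Prop :=
  S x /\ exists U : set X, open U /\ U `&` S = [set x].

Definition scattered (X : topologicalType) (S : set X) : Prop :=
  forall A : set X, A `<=` S -> A !=set0 -> exists x : X, isolated_in A x.

Definition hyperspace (X : topologicalType) : Type :=
  {A : set X | A !=set0 /\ compact A}.

HB.instance Definition _ (X : topologicalType) :=
  gen_eqMixin (hyperspace X).
HB.instance Definition _ (X : topologicalType) :=
  gen_choiceMixin (hyperspace X).

(* Vietoris topology: subbase U^+ = {A | A ⊆ U}, U^- = {A | A ∩ U ≠ ∅}, U open. *)
Definition vietoris_subbase (X : topologicalType) (i : bool * set X)
  : set (hyperspace X) :=
  if i.1 then [set A | proj1_sig A `<=` i.2]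
  else [set A | proj1_sig A `&` i.2 !=set0].

HB.instance Definition _ (X : topologicalType) :=
  @isSubBaseTopological.Build (hyperspace X) (bool * set X)%type
    [set i | open i.2] (@vietoris_subbase X).

(* Main.v *)
Require Import Defs.
From HB Require Import structures.
From mathcomp Require Import all_boot all_order all_algebra.
From mathcomp Require Import all_classical all_reals all_analysis.
From mathcomp Require Import finmap.
Local Open Scope classical_set_scope.

Set Implicit Arguments. Unset Strict Implicit. Unset Printing Implicit Defensive.

Section Hyp.
Context {X : topologicalType}.
Local Notation H := (hyperspace X).
Definition sv (A : H) : set X := proj1_sig A.

Lemma vietoris_open (i : bool * set X) : open i.2 -> open (@vietoris_subbase X i).
Proof.
move=> oi.
exists [set vietoris_subbase i]; last by rewrite bigcup_set1.
move=> ? ->; exists (fset1 i).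
  by move=> j; rewrite inE => /eqP ->; apply/mem_set.
by rewrite set_fset1 bigcap_set1.
Qed.

Lemma hopen_sub (U : set X) : open U -> open [set A : H | sv A `<=` U].
Proof. by move=> oU; exact: (@vietoris_open (true, U)). Qed.

Lemma hopen_meet (U : set X) : open U -> open [set A : H | sv A `&` U !=set0].
Proof. by move=> oU; exact: (@vietoris_open (false, U)). Qed.
End Hyp.

Section FinCover.
Context {X : topologicalType}.

Definition seqfilter : set_system (seq X) :=
  [set S | exists s0 : seq X, forall s, {subset s0 <= s} -> S s].

Lemma seqfilter_filter : Filter seqfilter.
Proof.
constructor.
- by exists [::].
- move=> P Q [s1 H1] [s2 H2]; exists (s1 ++ s2) => s Hs; split.
  + by apply: H1 => y ys; apply: Hs; rewrite mem_cat ys.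
  + by apply: H2 => y ys; apply: Hs; rewrite mem_cat ys orbT.
- by move=> P Q PQ [s0 H]; exists s0 => s /H /PQ.
Qed.

Lemma fin_cover (K : set X) (V : X -> set X) :
  compact K -> (forall x, K x -> open (V x) /\ V x x) ->
  exists s : seq X,
    K `<=` [set z | exists2 y, y \in s & K y /\ V y z].
Proof.
move=> /compact_near_coveringP cK HV.
have FF := seqfilter_filter.
have := cK (seq X) seqfilter
  (fun s z => exists2 y, y \in s & K y /\ V y z) FF.
case.
- move=> x Kx; have [oV Vx] := HV x Kx.
  exists (V x, [set s : seq X | x \in s]).
    split => /=; first by apply: open_nbhs_nbhs.
    by exists [:: x] => s /(_ x); rewrite inE eqxx => /(_ isT).
  by move=> [z s] /= [Vz xs]; exists x.
move=> s0 H0; exists s0; exact: H0.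
Qed.
End FinCover.

Lemma fin_inter_open (Y : topologicalType) (I : eqType) (s : seq I) (f : I -> set Y) :
  (forall i, open (f i)) -> open [set y | forall i, i \in s -> f i y].
Proof.
move=> hof; elim: s => [|a s IH].
  rewrite (_ : [set y | _] = setT); first exact: openT.
  by apply/seteqP; split => // y _ i.
rewrite (_ : [set y | _] = f a `&` [set y | forall i, i \in s -> f i y]).
  exact: openI.
apply/seteqP; split => y /=.
  by move=> h; split => [|i ins]; apply: h; rewrite inE ?eqxx ?ins ?orbT.
by move=> [fa H] i; rewrite inE => /orP[/eqP ->|/H].
Qed.

Section Main.
Context {X : topologicalType}.
Hypothesis hX : hausdorff_space X.
Variable C : set (hyperspace X).
Hypothesis cC : connected C.
Local Notation H := (hyperspace X).

Lemma sv_compact (A : H) : compact (sv A). Proof. by case: A => ? []. Qed.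
Lemma sv_nonempty (A : H) : sv A !=set0. Proof. by case: A => ? []. Qed.
Lemma sv_closed (A : H) : closed (sv A).
Proof. by apply: compact_closed; [exact: hX|exact: sv_compact]. Qed.

Definition Z : set (X * H) := [set z | C z.2 /\ sv z.2 z.1].

Definition nbhdp (z : X * H) (Q : X * H -> Prop) :=
  exists V W, [/\ open V, V z.1, open W, W z.2 & forall w, V w.1 -> W w.2 -> Q w].

Lemma nbhdpI z Q1 Q2 : nbhdp z Q1 -> nbhdp z Q2 -> nbhdp z (fun w => Q1 w /\ Q2 w).
Proof.
move=> [V1 [W1 [oV1 V1z oW1 W1z h1]]] [V2 [W2 [oV2 V2z oW2 W2z h2]]].
exists (V1 `&` V2), (W1 `&` W2); split => //; try exact: openI.
by move=> w [? ?] [? ?]; split; [apply: h1|apply: h2].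
Qed.

Lemma nbhdpS z (Q1 Q2 : X * H -> Prop) : nbhdp z Q1 -> (forall w, Q1 w -> Q2 w) -> nbhdp z Q2.
Proof.
move=> [V [W [oV Vz oW Wz h1]]] h; exists V, W; split => // w ? ?; exact/h/h1.
Qed.

Definition Gopen (G P : set (X * H)) :=
  forall z, G z -> P z -> nbhdp z (fun w => G w -> P w).
Definition zclosed (P : set (X * H)) :=
  forall z, Z z -> ~ P z -> nbhdp z (fun w => Z w -> ~ P w).
Definition lsc (G : set (X * H)) :=
  forall z, G z -> forall V, open V -> V z.1 ->
    exists W, [/\ open W, W z.2 & forall A, C A -> W A -> exists2 y, V y & G (y, A)].
Definition sheaf G := [/\ G `<=` Z, lsc G & zclosed G].
Definition Gclopen (G P : set (X * H)) := [/\ P `<=` G, Gopen G P & Gopen G (G `\` P)].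

Lemma C_clopen (S : set H) : S `<=` C -> S !=set0 ->
  (forall A, S A -> exists W, [/\ open W, W A & forall A', C A' -> W A' -> S A']) ->
  (forall A, C A -> ~ S A -> exists W, [/\ open W, W A & forall A', C A' -> W A' -> ~ S A']) ->
  forall A, C A -> S A.
Proof.
move=> SC S0 hO hF.
suff -> : S = C by [].
apply: cC => //.
- exists (\bigcup_(W in [set W | open W /\ forall A', C A' -> W A' -> S A']) W).
    by apply: bigcup_open => W [].
  apply/seteqP; split => A.
    move=> SA; split; first exact: SC.
    by have [W [oW WA h]] := hO A SA; exists W.
  by move=> [CA [W [_ h] WA]]; exact: h.
- exists (~` \bigcup_(W in [set W | open W /\ forall A', C A' -> W A' -> ~ S A']) W).
    by apply: open_closedC; apply: bigcup_open => W [].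
  apply/seteqP; split => A.
    move=> SA; split; first exact: SC.
    by move=> [W [_ h] WA]; apply: (h A (SC _ SA) WA).
  move=> [CA nU]; apply: contrapT => nSA; apply: nU.
  by have [W [oW WA h]] := hF A CA nSA; exists W.
Qed.

Lemma usc_nbhd (P : set (X * H)) (A : H) : C A ->
  (forall y, sv A y -> nbhdp (y, A) (fun w => Z w -> ~ P w)) ->
  exists W, [/\ open W, W A & forall A', C A' -> W A' -> forall y, sv A' y -> ~ P (y, A')].
Proof.
move=> CA hA.
have : forall y, exists VW : set X * set H, [/\ open VW.1, open VW.2, VW.2 A &
   sv A y -> VW.1 y /\ forall w, VW.1 w.1 -> VW.2 w.2 -> Z w -> ~ P w].
  move=> y; have [Ay|nAy] := pselect (sv A y).
    have [V [W [oV Vy oW WA h]]] := hA y Ay.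
    by exists (V, W); split => //= _; split => // w ? ?; exact: h.
  by exists (setT, setT); split => //=; try exact: openT.
move=> /choice [f hf].
have [s hs] := @fin_cover _ (sv A) (fun y => (f y).1) (@sv_compact A)
  (fun y Ay => let: And4 o1 _ _ h := hf y in conj o1 (proj1 (h Ay))).
pose U := \bigcup_(y in [set y | y \in s /\ sv A y]) (f y).1.
exists ([set A' | forall y, y \in s -> (f y).2 A'] `&` [set A' : H | sv A' `<=` U]).
split.
- apply: openI; first by apply: fin_inter_open => y; have [] := hf y.
  apply: hopen_sub; apply: bigcup_open => y _; by have [] := hf y.
- split; first by move=> y _; have [] := hf y.
  by move=> y /hs [y0 y0s [Ay0 fy0]]; exists y0.
move=> A' CA' [h1 h2] y A'y.
have [y0 /= [y0s Ay0] fy0] := h2 y A'y.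
move: (hf y0) => [_ _ _ /(_ Ay0) [_ h]].
by apply: (h (y, A')) => //=; apply: h1.
Qed.

End Main.

Section Main2.
Context {X : topologicalType}.
Hypothesis hX : hausdorff_space X.
Variable C : set (hyperspace X).
Hypothesis cC : connected C.
Local Notation H := (hyperspace X).
Local Notation Z := (Z C).
Local Notation lsc := (lsc C).
Local Notation zclosed := (zclosed C).
Local Notation sheaf := (sheaf C).
Implicit Types (G P Q : set (X * H)) (z w u : X * H).

Lemma Z_sheaf : sheaf Z.
Proof.
split; [by []| |by move=> z Zz []].
move=> z Zz V oV Vz; exists [set A : H | sv A `&` V !=set0]; split.
+ exact: hopen_meet.
+ by exists z.1; split => //; case: Zz.
+ by move=> A CA [y [Ay Vy]]; exists y.
Qed.

Lemma GclopenT G : Gclopen G G.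
Proof.
split; [by []| |by move=> z _ []].
by move=> z _ _; exists setT, setT; split => //; exact: openT.
Qed.

Lemma GclopenC G P : Gclopen G P -> Gclopen G (G `\` P).
Proof.
move=> [PG oP oPc]; split; [by move=> w []|exact: oPc|].
move=> z Gz [_ nn]; have Pz : P z by apply: contrapT => nP; apply: nn.
refine (nbhdpS (oP z Gz Pz) _); move=> w h Gw; split => // -[_]; apply; exact: h.
Qed.

Lemma GclopenI G P Q : Gclopen G P -> Gclopen G Q -> Gclopen G (P `&` Q).
Proof.
move=> [PG oP oPc] [QG oQ oQc]; split.
- by move=> w [/PG].
- move=> z Gz [Pz Qz]; refine (nbhdpS (nbhdpI (oP z Gz Pz) (oQ z Gz Qz)) _).
  by move=> w [h1 h2] Gw; split; [apply: h1|apply: h2].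
- move=> z Gz [_ nPQ].
  have [Pz|nPz] := pselect (P z); last first.
    refine (nbhdpS (oPc z Gz (conj Gz nPz)) _); move=> w h Gw; split => //.
    by move=> [Pw _]; have [] := h Gw.
  have nQz : ~ Q z by move=> Qz; apply: nPQ.
  refine (nbhdpS (oQc z Gz (conj Gz nQz)) _); move=> w h Gw; split => //.
  by move=> [_ Qw]; have [] := h Gw.
Qed.

Lemma Gclopen_ext G P Q : (forall w, G w -> (P w <-> Q w)) -> Q `<=` G ->
  Gclopen G P -> Gclopen G Q.
Proof.
move=> PQ QG [PG oP oPc]; split => //.
- move=> z Gz /(PQ z Gz) Pz; refine (nbhdpS (oP z Gz Pz) _); move=> w h Gw.
  by apply/(PQ w Gw)/h.
- move=> z Gz [_ nQz]; have nPz : ~ P z by move/(PQ z Gz).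
  refine (nbhdpS (oPc z Gz (conj Gz nPz)) _); move=> w h Gw; split => //.
  by move/(PQ w Gw); have [] := h Gw.
Qed.

Lemma Gclopen_fin (G : set (X * H)) (I : eqType) (s : seq I) (f : I -> set (X * H)) :
  (forall i, Gclopen G (f i)) ->
  Gclopen G [set w | G w /\ forall i, i \in s -> f i w].
Proof.
move=> hf; elim: s => [|a s IH].
  apply: (Gclopen_ext _ _ (GclopenT G)); last by move=> w [].
  by move=> w Gw; split => [_|[]//]; split => // i; rewrite in_nil.
apply: (Gclopen_ext _ _ (GclopenI (hf a) IH)); last by move=> w [].
move=> w Gw; split.
  move=> [fa [_ h]]; split => // i; rewrite inE => /orP[/eqP ->//|/h//].
move=> [_ h]; split; first by apply: h; rewrite inE eqxx.
by split => // i ins; apply: h; rewrite inE ins orbT.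
Qed.

Lemma clopen_sheaf G P : sheaf G -> Gclopen G P -> sheaf P.
Proof.
move=> [GZ lG cG] [PG oP oPc]; split.
- by move=> w /PG /GZ.
- move=> z Pz V oV Vz.
  have [V1 [W1 [oV1 V1z oW1 W1z h1]]] := oP z (PG _ Pz) Pz.
  have [W [oW Wz h]] := lG z (PG _ Pz) (V `&` V1) (openI oV oV1) (conj Vz V1z).
  exists (W `&` W1); split => //; first exact: openI.
  move=> A CA [WA W1A]; have [y [Vy V1y] Gy] := h A CA WA.
  by exists y => //; apply: h1.
- move=> z Zz nPz.
  have [Gz|nGz] := pselect (G z); last first.
    by refine (nbhdpS (cG z Zz nGz) _); move=> w h Zw /PG; apply: h.
  refine (nbhdpS (oPc z Gz (conj Gz nPz)) _); move=> w h Zw Pw.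
  by have [] := h (PG _ Pw).
Qed.

Lemma sheaf_full G z : sheaf G -> G z -> forall A, C A -> exists y, G (y, A).
Proof.
move=> [GZ lG cG] Gz.
pose S := [set A | C A /\ exists y, G (y, A)].
suff h : forall A, C A -> S A by move=> A /h [].
apply: (@C_clopen _ _ cC S).
- by move=> A [].
- by exists z.2; split; [case: (GZ _ Gz)|exists z.1; case: z Gz].
- move=> A [CA [y Gy]].
  have [W [oW WA h]] := lG (y, A) Gy setT openT I.
  exists W; split => // A' CA' WA'; split => //.
  by have [y' _ ?] := h A' CA' WA'; exists y'.
- move=> A CA nSA.
  have nG : forall y, ~ G (y, A) by move=> y Gy; apply: nSA; split => //; exists y.
  have [W [oW WA h]] := @usc_nbhd _ C G A CA (fun y Ay => cG (y, A) (conj CA Ay) (nG y)).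
  exists W; split => // A' CA' WA' [_ [y Gy]].
  by apply: (h A' CA' WA' y) => //; have [] := GZ _ Gy.
Qed.

Definition cls (G : set (X * H)) (z : X * H) : set (X * H) :=
  [set w | G w /\ forall P, Gclopen G P -> P z -> P w].

Lemma cls_refl G z : G z -> cls G z z.
Proof. by move=> Gz; split. Qed.

Lemma cls_sym G z w : G z -> cls G z w -> cls G w z.
Proof.
move=> Gz [Gw h]; split => // P cP Pw; apply: contrapT => nPz.
have := h _ (GclopenC cP) (conj Gz nPz); by move=> [].
Qed.

Lemma cls_trans G z w u : cls G z w -> cls G w u -> cls G z u.
Proof. by move=> [Gw h1] [Gu h2]; split => // P cP Pz; apply: (h2 P cP); apply: (h1 P cP). Qed.

Lemma cls_sub G P z : Gclopen G P -> P z -> cls G z `<=` P.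
Proof. by move=> cP Pz w [_ h]; apply: h. Qed.

Lemma cls_zclosed G z : sheaf G -> zclosed (cls G z).
Proof.
move=> [GZ lG cG] w Zw nw.
have [Gw|nGw] := pselect (G w); last first.
  by refine (nbhdpS (cG w Zw nGw) _); move=> u h Zu [Gu _]; apply: h.
have [P [cP Pz nPw]] : exists P, [/\ Gclopen G P, P z & ~ P w].
  apply: contrapT => hn; apply: nw; split => // P cP Pz.
  by apply: contrapT => nPw; apply: hn; exists P.
have [_ _ cP'] := clopen_sheaf (And3 GZ lG cG) cP.
by refine (nbhdpS (cP' w Zw nPw) _); move=> u h Zu [_ hu]; apply: (h Zu); apply: hu.
Qed.

End Main2.

Section Main3.
Context {X : topologicalType}.
Hypothesis hX : hausdorff_space X.
Variable C : set (hyperspace X).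
Hypothesis cC : connected C.
Local Notation H := (hyperspace X).
Local Notation Z := (Z C).
Local Notation lsc := (lsc C).
Local Notation zclosed := (zclosed C).
Local Notation sheaf := (sheaf C).
Implicit Types (G P Q : set (X * H)) (z w u : X * H).

Lemma cls_full G z : sheaf G -> G z -> forall A, C A -> exists y, cls G z (y, A).
Proof.
move=> sG Gz A CA; apply: contrapT => hn.
have nc : forall y, ~ cls G z (y, A) by move=> y c; apply: hn; exists y.
have : forall y, exists VP : set X * set (X * H), [/\ open VP.1, Gclopen G VP.2, VP.2 z &
    sv A y -> VP.1 y /\ forall y', sv A y' -> VP.1 y' -> ~ VP.2 (y', A)].
  move=> y; have [Ay|nAy] := pselect (sv A y); last first.
    by exists (setT, G); split => //; [exact: openT|exact: GclopenT].
  have Zy : Z (y, A) by split.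
  have [Gy|nGy] := pselect (G (y, A)).
    have [P [cP Pz nPy]] : exists P, [/\ Gclopen G P, P z & ~ P (y, A)].
      apply: contrapT => hn2; apply: (nc y); split => // P cP Pz.
      by apply: contrapT => nPy; apply: hn2; exists P.
    have [_ _ cP'] := clopen_sheaf sG cP.
    have [V [W [oV Vy oW WA h]]] := cP' (y, A) Zy nPy.
    exists (V, P); split => // _; split => // y' Ay' Vy'.
    exact: (h (y', A) Vy' WA (conj CA Ay')).
  have [_ _ cG] := sG.
  have [V [W [oV Vy oW WA h]]] := cG (y, A) Zy nGy.
  exists (V, G); split => //; first exact: GclopenT.
  by move=> _; split => // y' Ay' Vy'; exact: (h (y', A) Vy' WA (conj CA Ay')).
move=> /choice [f hf].
have [s hs] := @fin_cover _ (sv A) (fun y => (f y).1) (@sv_compact _ A)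
  (fun y Ay => let: And4 o1 _ _ h := hf y in conj o1 (proj1 (h Ay))).
pose P := [set w | G w /\ forall y, y \in s -> (f y).2 w].
have cP : Gclopen G P.
  by apply: Gclopen_fin => y; have [] := hf y.
have Pz : P z by split => // y _; have [] := hf y.
have [y' Py'] := sheaf_full cC (clopen_sheaf sG cP) Pz CA.
have Ay' : sv A y'.
  by have [GZ _ _] := sG; have [_] := GZ _ Py'.1.
have [y ys [Ay fy]] := hs y' Ay'.
have [_ _ _ /(_ Ay) [_ h]] := hf y.
exact: (h y' Ay' fy (Py'.2 y ys)).
Qed.

Lemma line_cls G x A1 A2 : sheaf G -> (forall A, C A -> G (x, A)) -> C A1 -> C A2 ->
  cls G (x, A1) (x, A2).
Proof.
move=> sG hx CA1 CA2; split; first exact: hx.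
move=> P [PG oP oPc] P1.
pose S := [set A | C A /\ P (x, A)].
suff : S A2 by case.
apply: (@C_clopen _ _ cC S) => //.
- by move=> A [].
- by exists A1.
- move=> A [CA PA].
  have [V [W [oV Vx oW WA h]]] := oP (x, A) (hx A CA) PA.
  by exists W; split => // A' CA' WA'; split => //; exact: (h (x, A') Vx WA' (hx A' CA')).
- move=> A CA nSA; have nPA : ~ P (x, A) by move=> PA; apply: nSA.
  have [V [W [oV Vx oW WA h]]] := oPc (x, A) (hx A CA) (conj (hx A CA) nPA).
  exists W; split => // A' CA' WA' [_ PA'].
  by have [_] := h (x, A') Vx WA' (hx A' CA').
Qed.

Lemma cls_connected_image G W0 z : Gclopen G W0 -> G z -> (forall w, W0 w -> cls G z w) ->
  connected [set x | exists A, W0 (x, A)].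
Proof.
move=> [WG oW oWc] Gz hW B [b Bb] [Op oO BO] [Fc cF BF].
pose Q := [set x | exists A, W0 (x, A)].
pose P := [set w | W0 w /\ Op w.1].
have cP : Gclopen G P.
  split.
  - by move=> w [/WG].
  - move=> w Gw [Ww Ow].
    have nO : nbhdp w (fun u => Op u.1).
      by exists Op, setT; split => //; exact: openT.
    refine (nbhdpS (nbhdpI (oW w Gw Ww) nO) _).
    by move=> u [h1 h2] Gu; split => //; exact: h1.
  - move=> w Gw [_ nPw]; have [Ww|nWw] := pselect (W0 w); last first.
      refine (nbhdpS (oWc w Gw (conj Gw nWw)) _).
      by move=> u h Gu; split => // -[Wu _]; have [] := h Gu.
    have nOw : ~ Op w.1 by move=> Ow; apply: nPw.
    have Qw : Q w.1 by exists w.2; case: w Ww {Gw nPw nOw}.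
    have nFw : ~ Fc w.1.
      move=> Fw; have : B w.1 by rewrite BF.
      by rewrite BO => -[].
    exists (~` Fc), setT; split => //; [exact: closed_openC|exact: openT|].
    move=> u nFu _ Gu; split => // -[Wu Ou]; apply: nFu.
    have Qu : Q u.1 by exists u.2; case: u Wu {Ou Gu}.
    have : B u.1 by rewrite BO.
    by rewrite BF => -[].
have : Q b by move: Bb; rewrite BO => -[].
move=> [A0 W0b].
have P0 : P (b, A0) by split => //; move: Bb; rewrite BO => -[].
rewrite BO; apply/seteqP; split; first by move=> x [].
move=> x [A WxA]; split; first by exists A.
have c1 := hW _ WxA; have c2 := hW _ W0b.
have c3 : cls G (b, A0) (x, A) by apply: cls_trans (cls_sym Gz c2) c1.
by have [_ /(_ P cP P0) [_ ?]] := c3.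
Qed.

End Main3.

Section Main4.
Context {X : topologicalType}.
Hypothesis hX : hausdorff_space X.
Variable C : set (hyperspace X).
Hypothesis cC : connected C.
Local Notation H := (hyperspace X).
Local Notation Z := (Z C).
Local Notation lsc := (lsc C).
Local Notation zclosed := (zclosed C).
Local Notation sheaf := (sheaf C).
Implicit Types (G P Q : set (X * H)) (z w u : X * H).

Lemma sep_fiber G z A (K : set X) : sheaf G -> G z -> C A -> compact K -> K `<=` sv A ->
  (forall y, K y -> ~ cls G z (y, A)) ->
  exists P, [/\ Gclopen G P, P z & forall y, K y -> ~ P (y, A)].
Proof.
move=> sG Gz CA cK KA nc.
have : forall y, exists VP : set X * set (X * H), [/\ open VP.1, Gclopen G VP.2, VP.2 z &
    K y -> VP.1 y /\ forall y', sv A y' -> VP.1 y' -> ~ VP.2 (y', A)].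
  move=> y; have [Ky|nKy] := pselect (K y); last first.
    by exists (setT, G); split => //; [exact: openT|exact: GclopenT].
  have Ay := KA _ Ky.
  have Zy : Z (y, A) by split.
  have [Gy|nGy] := pselect (G (y, A)).
    have [P [cP Pz nPy]] : exists P, [/\ Gclopen G P, P z & ~ P (y, A)].
      apply: contrapT => hn2; apply: (nc y Ky); split => // P cP Pz.
      by apply: contrapT => nPy; apply: hn2; exists P.
    have [_ _ cP'] := clopen_sheaf sG cP.
    have [V [W [oV Vy oW WA h]]] := cP' (y, A) Zy nPy.
    exists (V, P); split => // _; split => // y' Ay' Vy'.
    exact: (h (y', A) Vy' WA (conj CA Ay')).
  have [_ _ cG] := sG.
  have [V [W [oV Vy oW WA h]]] := cG (y, A) Zy nGy.
  exists (V, G); split => //; first exact: GclopenT.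
  by move=> _; split => // y' Ay' Vy'; exact: (h (y', A) Vy' WA (conj CA Ay')).
move=> /choice [f hf].
have [s hs] := @fin_cover _ K (fun y => (f y).1) cK
  (fun y Ky => let: And4 o1 _ _ h := hf y in conj o1 (proj1 (h Ky))).
pose P := [set w | G w /\ forall y, y \in s -> (f y).2 w].
have cP : Gclopen G P.
  by apply: Gclopen_fin => y; have [] := hf y.
have Pz : P z by split => // y _; have [] := hf y.
exists P; split => // y' Ky' Py'.
have [y ys [Ky fy]] := hs y' Ky'.
have [_ _ _ /(_ Ky) [_ h]] := hf y.
exact: (h y' (KA _ Ky') fy (Py'.2 y ys)).
Qed.

Lemma cls_fiber_closed G z A : sheaf G -> C A -> closed [set y | sv A y /\ cls G z (y, A)].
Proof.
move=> sG CA.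
rewrite (_ : [set y | _] = sv A `&` ~` [set y | exists W, [/\ open W, W y &
   forall y', W y' -> sv A y' -> ~ cls G z (y', A)]]).
  apply: closedI; first exact: (sv_closed hX).
  apply: open_closedC.
  rewrite (_ : [set y | _] = \bigcup_(W in [set W | open W /\ forall y', W y' -> sv A y' -> ~ cls G z (y', A)]) W).
    by apply: bigcup_open => W [].
  apply/seteqP; split => y.
    by move=> [W [oW Wy h]]; exists W.
  by move=> [W [oW h] Wy]; exists W.
apply/seteqP; split => y.
  move=> [Ay cy]; split => // -[W [oW Wy h]]; exact: (h y Wy Ay).
move=> [Ay nW]; split => //; apply: contrapT => ncy; apply: nW.
have [V [W [oV Vy oW WA h]]] := cls_zclosed sG (conj CA Ay : Z (y, A)) ncy.
by exists V; split => // y' Vy' Ay'; exact: (h (y', A) Vy' WA (conj CA Ay')).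
Qed.

End Main4.

Section Main5.
Context {X : topologicalType}.
Hypothesis hX : hausdorff_space X.
Variable C : set (hyperspace X).
Hypothesis cC : connected C.
Local Notation H := (hyperspace X).
Local Notation Z := (Z C).
Local Notation sheaf := (sheaf C).
Implicit Types (G P Q : set (X * H)) (z w u : X * H).

Lemma chain_max (F : set (set X)) (g : X -> set X) (s : seq X) (A1 : set X) :
  total_on F subset -> F A1 -> (forall y, F (g y)) ->
  exists Am, F Am /\ forall y, y \in s -> g y `<=` Am.
Proof.
move=> tot FA1 Fg; elim: s => [|a s [Am [FAm h]]]; first by exists A1.
have [ga|ga] := tot _ _ (Fg a) FAm.
  exists Am; split => // y; rewrite inE => /orP[/eqP ->//|/h//].
exists (g a); split => // y; rewrite inE => /orP[/eqP ->//|/h].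
by move=> h1; apply: subset_trans h1 ga.
Qed.

Lemma iso_class G (bad : X * H -> Prop) (T : H) : sheaf G -> C T -> scattered (sv T) ->
  (forall z w, bad z -> cls G z w -> bad w) -> (forall z, bad z -> G z) ->
  (exists z, bad z) ->
  exists z0 P, [/\ bad z0, Gclopen G P, P z0 & forall w, P w -> bad w -> cls G z0 w].
Proof.
move=> sG CT sT bsat bG [zb bzb].
have GZ : G `<=` Z by case: sG.
pose Fs (A0 : set X) := sv T `&` ~` A0.
pose PP := [set A0 : set X | closed (Fs A0) /\
  forall z, bad z -> exists y, Fs A0 y /\ cls G z (y, T)].
have [A [[cA trA] maxA]] : exists A, PP A /\ forall B, A `<` B -> ~ PP B.
  apply: Zorn_bigcup => F FP Ftot; split.
    rewrite (_ : Fs _ = sv T `&` \bigcap_(A0 in F) Fs A0).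
      apply: closedI; first exact: (sv_closed hX).
      by apply: closed_bigI => A0 /FP [].
    apply/seteqP; split => y.
      by move=> [Ty nU]; split => // A0 FA0; split => // A0y; apply: nU; exists A0.
    by move=> [Ty h]; split => // -[A0 FA0 A0y]; have [] := h A0 FA0.
  move=> z bz; apply: contrapT => hn.
  pose K := [set y | sv T y /\ cls G z (y, T)].
  have hK : forall y, K y -> exists2 A0, F A0 & A0 y.
    move=> y [Ty cy]; apply: contrapT => hn2; apply: hn; exists y; split; last exact: cy.
    split; first exact: Ty.
    by move=> -[A0 FA0 A0y]; apply: hn2; exists A0.
  have cK : compact K.
    apply: (@subclosed_compact _ K (sv T)); first exact: (cls_fiber_closed hX sG CT).
      exact: sv_compact.
    by move=> y [].
  have [y1 cy1] := cls_full cC sG (bG _ bz) CT.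
  have Ky1 : K y1 by split => //; have [] := GZ _ cy1.1.
  have [A1 FA1 _] := hK y1 Ky1.
  have : forall y, exists B, F B /\ (K y -> B y).
    move=> y; have [Ky|nKy] := pselect (K y).
      by have [B FB By] := hK y Ky; exists B.
    by exists A1.
  move=> /choice [g hg].
  have [s hs] := @fin_cover _ K (fun y => ~` Fs (g y)) cK
    (fun y Ky => conj (closed_openC (proj1 (FP _ (proj1 (hg y))))) (fun h : Fs (g y) y => proj2 h (proj2 (hg y) Ky))).
  have [Am [FAm hAm]] := chain_max s Ftot FA1 (fun y => proj1 (hg y)).
  have [y [Fy cy]] := (FP _ FAm).2 z bz.
  have Ky : K y by split => //; case: Fy.
  have [y' y's [Ky' ny']] := hs y Ky.
  apply: Fy.2; apply: (hAm y' y's).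
  by apply: contrapT => ng; apply: ny'; split => //; case: Fy.
have [yb [F0yb _]] := trA zb bzb.
have [x [F0x [U [oU UF0]]]] := sT (Fs A) (fun y => @proj1 _ _) (ex_intro _ yb F0yb).
pose B := A `|` [set x].
have AB : A `<` B.
  split; first by move=> y Ay; left.
  by move=> /(_ x (or_intror erefl)); apply: F0x.2.
have FsB : Fs B = Fs A `&` ~` U.
  apply/seteqP; split => y.
    move=> [Ty nB]; have nA : ~ A y by move=> Ay; apply: nB; left.
    split; first by split.
    move=> Uy; apply: nB; right.
    have : (U `&` Fs A) y by split.
    by rewrite UF0.
  move=> [[Ty nA] nU]; split => // -[//|/= yx]; apply: nU; rewrite yx.
  by have : [set x] x by []; rewrite -UF0 => -[].
have cB : closed (Fs B) by rewrite FsB; apply: closedI => //; exact: open_closedC.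
have [z0 [bz0 nz0]] : exists z0, bad z0 /\ forall y, Fs B y -> ~ cls G z0 (y, T).
  apply: contrapT => hn; apply: (maxA B AB); split => // z bz.
  apply: contrapT => hn2; apply: hn; exists z; split => // y Fy cy.
  by apply: hn2; exists y.
have [y0 [F0y0 cy0]] := trA z0 bz0.
have y0x : y0 = x.
  have Uy0 : U y0.
    apply: contrapT => nU; apply: (nz0 y0) => //; rewrite FsB; by split.
  by have : (U `&` Fs A) y0 by []; rewrite UF0.
subst y0.
have cKB : compact (Fs B).
  apply: (@subclosed_compact _ (Fs B) (sv T)) => //; first exact: sv_compact.
  by move=> y [].
have [P [cP Pz0 nP]] := sep_fiber sG (bG _ bz0) CT cKB (fun y => @proj1 _ _) nz0.
exists z0, P; split => // w Pw bw.
have [y [F0y cwy]] := trA w bw.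
have Py : P (y, T) by apply: (cls_sub cP Pw).
have Uy : U y.
  by apply: contrapT => nU; apply: (nP y) => //; rewrite FsB.
have yx : y = x by have : (U `&` Fs A) y by []; rewrite UF0.
subst y.
apply: cls_trans cy0 _.
exact: cls_sym (bG _ bw) cwy.
Qed.

End Main5.

Section Sep.
Context {X : topologicalType}.
Hypothesis hX : hausdorff_space X.

Lemma sep_pt_compact (x : X) (K : set X) : compact K -> ~ K x ->
  exists U V, [/\ open U, open V, U x, K `<=` V & U `&` V = set0].
Proof.
move=> cK nKx.
have : forall k, exists UV : set X * set X, [/\ open UV.1, open UV.2, UV.1 x &
   K k -> UV.2 k /\ UV.1 `&` UV.2 = set0].
  move=> k; have [Kk|nKk] := pselect (K k); last first.
    by exists (setT, setT); split => //; exact: openT.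
  have xk : x != k by apply/eqP => xk; apply: nKx; rewrite xk.
  move: hX; rewrite open_hausdorff => /(_ x k xk) [[A B] /= [xA kB] [oA oB /eqP AB]].
  by exists (A, B); split => //; [exact: set_mem|move=> _; split => //; exact: set_mem].
move=> /choice [f hf].
have [s hs] := @fin_cover _ K (fun k => (f k).2) cK
  (fun k Kk => let: And4 _ o2 _ h := hf k in conj o2 (proj1 (h Kk))).
exists [set u | forall k, k \in s -> (f k).1 u].
exists (\bigcup_(k in [set k | k \in s /\ K k]) (f k).2); split.
- by apply: fin_inter_open => k; have [] := hf k.
- by apply: bigcup_open => k _; have [] := hf k.
- by move=> k ks; have [] := hf k.
- by move=> u /hs [k ks [Kk fk]]; exists k.
- apply/seteqP; split => // u [hu [k [ks Kk] fk]].
  have [_ _ _ /(_ Kk) [_ e]] := hf k.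
  have : ((f k).1 `&` (f k).2) u by split => //; apply: hu.
  by rewrite e.
Qed.

Lemma sep_compact (A B : set X) : compact A -> compact B -> A `&` B = set0 ->
  exists U V, [/\ open U, open V, A `<=` U, B `<=` V & U `&` V = set0].
Proof.
move=> cA cB AB.
have : forall a, exists UV : set X * set X, [/\ open UV.1, open UV.2, B `<=` UV.2 &
   A a -> UV.1 a /\ UV.1 `&` UV.2 = set0].
  move=> a; have [Aa|nAa] := pselect (A a); last first.
    by exists (setT, setT); split => //; exact: openT.
  have nBa : ~ B a by move=> Ba; have : (A `&` B) a by []; rewrite AB.
  have [U [V [oU oV Ua BV UV]]] := sep_pt_compact cB nBa.
  by exists (U, V).
move=> /choice [f hf].
have [s hs] := @fin_cover _ A (fun a => (f a).1) cA
  (fun a Aa => let: And4 o1 _ _ h := hf a in conj o1 (proj1 (h Aa))).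
exists (\bigcup_(a in [set a | a \in s /\ A a]) (f a).1).
exists [set u | forall a, a \in s -> (f a).2 u]; split.
- by apply: bigcup_open => a _; have [] := hf a.
- by apply: fin_inter_open => a; have [] := hf a.
- by move=> u /hs [a as_ [Aa fa]]; exists a.
- by move=> u Bu a _; have [_ _ h _] := hf a; exact: h.
- apply/seteqP; split => // u [[a [as_ Aa] fa] hu].
  have [_ _ _ /(_ Aa) [_ e]] := hf a.
  have : ((f a).1 `&` (f a).2) u by split => //; apply: hu.
  by rewrite e.
Qed.

End Sep.

Section ZD.
Context {X : topologicalType}.
Hypothesis hX : hausdorff_space X.
Hypothesis hd : hereditarily_disconnected X.

Definition kclopen (K O F : set X) := [/\ open O, closed F & K `&` O = K `&` F].

Lemma kc_iff K O F u : kclopen K O F -> K u -> (O u <-> F u).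
Proof.
move=> [_ _ e] Ku; split => h.
  have : (K `&` F) u by rewrite -e; split.
  by case.
have : (K `&` O) u by rewrite e; split.
by case.
Qed.

Lemma kc_OF K O F u : kclopen K O F -> K u -> O u -> F u.
Proof. by move=> k Ku; case: (kc_iff k Ku). Qed.
Lemma kc_FO K O F u : kclopen K O F -> K u -> F u -> O u.
Proof. by move=> k Ku; case: (kc_iff k Ku). Qed.

Lemma kclopenT K : kclopen K setT setT.
Proof. by split => //; exact: openT. Qed.

Lemma kclopen_fin K (I : eqType) (s : seq I) (f : I -> set X * set X) :
  (forall i, kclopen K (f i).1 (f i).2) ->
  kclopen K [set u | forall i, i \in s -> (f i).1 u] [set u | forall i, i \in s -> (f i).2 u].
Proof.
move=> hf; split.
- by apply: fin_inter_open => i; have [] := hf i.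
- rewrite (_ : [set u | _] = \bigcap_(i in [set i | i \in s]) (f i).2).
    by apply: closed_bigI => i _; have [] := hf i.
  by apply/seteqP; split => u h i; apply: h.
- apply/seteqP; split => u [Ku h]; split => // i ins.
    by apply/(kc_iff (hf i) Ku)/h.
  by apply/(kc_iff (hf i) Ku)/h.
Qed.

Lemma kclopenI K O1 F1 O2 F2 : kclopen K O1 F1 -> kclopen K O2 F2 ->
  kclopen K (O1 `&` O2) (F1 `&` F2).
Proof.
move=> k1 k2; have [p1 c1 _] := k1; have [p2 c2 _] := k2; split.
- exact: openI.
- exact: closedI.
- apply/seteqP; split => u [Ku [h1 h2]]; split => //; split.
  + by apply/(kc_iff k1 Ku).
  + by apply/(kc_iff k2 Ku).
  + by apply/(kc_iff k1 Ku).
  + by apply/(kc_iff k2 Ku).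
Qed.

Lemma zero_dim (K : set X) (y : X) (Kc : set X) : compact K -> K y -> closed Kc ->
  Kc `<=` K -> ~ Kc y ->
  exists Op Fc, [/\ kclopen K Op Fc, Op y & forall k, Kc k -> ~ Op k].
Proof.
move=> cK Ky cKc KcK nKcy.
have clK : closed K by apply: compact_closed.
pose qc := [set u | K u /\ forall Op Fc, kclopen K Op Fc -> Op y -> Op u].
have qcy : qc y by split.
have qcK : qc `<=` K by move=> u [].
have cqc : closed qc.
  rewrite (_ : qc = K `&` \bigcap_(OF in [set OF : set X * set X | kclopen K OF.1 OF.2 /\ OF.1 y]) OF.2).
    by apply: closedI => //; apply: closed_bigI => -[ Op Fc] /= [kOF _]; case: kOF.
  apply/seteqP; split => u.
    move=> [Ku h]; split => // -[ Op Fc] /= [kOF Oy].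
    by exact: (kc_OF kOF Ku (h Op Fc kOF Oy)).
  move=> [Ku h]; split => // Op Fc kOF Oy.
  by apply: (kc_FO kOF Ku); apply: (h (Op, Fc)).
have conn : connected qc.
  move=> B [b Bb] [ O1 oO1 BO1] [F1 cF1 BF1].
  apply: contrapT => nBq.
  have [u [qu nBu]] : exists u, qc u /\ ~ B u.
    apply: contrapT => hn; apply: nBq; apply/seteqP; split.
      by rewrite BO1 => v [].
    by move=> v qv; apply: contrapT => nBv; apply: hn; exists v.
  pose B' := qc `&` ~` O1.
  have cB : compact B.
    apply: (subclosed_compact _ cK); first by rewrite BF1; exact: closedI.
    by rewrite BO1 => v [/qcK].
  have cB' : compact B'.
    apply: (subclosed_compact _ cK); first by apply: closedI => //; exact: open_closedC.
    by move=> v [/qcK].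
  have BB' : B `&` B' = set0.
    by apply/seteqP; split => // v; rewrite BO1 => -[[_ ?] [_ ?]].
  have [U1 [U2 [oU1 oU2 BU1 B'U2 U12]]] := sep_compact hX cB cB' BB'.
  have qcU : forall v, qc v -> U1 v \/ U2 v.
    move=> v qv; have [ Ov|nOv] := pselect (O1 v).
      by left; apply: BU1; rewrite BO1.
    by right; apply: B'U2.
  pose R := K `&` ~` (U1 `|` U2).
  have cR : compact R.
    apply: (subclosed_compact _ cK); last by move=> v [].
    by apply: closedI => //; apply: open_closedC; exact: openU.
  have : forall r, exists OF : set X * set X, [/\ kclopen K OF.1 OF.2, OF.1 y &
      R r -> ~ OF.2 r].
    move=> r; have [Rr|nRr] := pselect (R r); last by exists (setT, setT); split => //; exact: kclopenT.
    have nqr : ~ qc r by move=> /qcU h; case: Rr => _; apply.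
    have [ Op [Fc [kOF Oy nOr]]] : exists Op Fc, [/\ kclopen K Op Fc, Op y & ~ Op r].
      apply: contrapT => hn; apply: nqr; split; first by case: Rr.
      move=> Op Fc kOF Oy; apply: contrapT => nOr; apply: hn; by exists Op, Fc.
    exists (Op, Fc); split => // _ Fr; apply: nOr.
    by apply: (kc_FO kOF (proj1 Rr)).
  move=> /choice [g hg].
  have [s hs] := @fin_cover _ R (fun r => ~` (g r).2) cR
    (fun r Rr => let: And3 k _ h := hg r in
      conj (closed_openC (let: And3 _ c _ := k in c)) (h Rr)).
  have kS := @kclopen_fin K _ s g (fun r => let: And3 k _ _ := hg r in k).
  set Os := [set v | _] in kS; set Fs := [set v | forall i, _ -> _] in kS.
  have Osy : Os y by move=> r _; have [] := hg r.
  have FsU : forall v, K v -> Fs v -> U1 v \/ U2 v.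
    move=> v Kv Fv; apply: contrapT => nU.
    have Rv : R v by split; [exact: Kv|move=> [?|?]; apply: nU; [left|right]].
    have [r rs [Rr nFr]] := hs v Rv.
    by apply: nFr; apply: Fv.
  have [By|nBy] := pselect (B y).
    have kT : kclopen K (Os `&` U1) (Fs `&` ~` U2).
      have [p1 c1 _] := kS; split.
      - exact: openI.
      - by apply: closedI => //; exact: open_closedC.
      - apply/seteqP; split => v [Kv [h1 h2]]; split => //.
          split; first by apply: (kc_OF kS Kv).
          by move=> U2v; have : (U1 `&` U2) v by []; rewrite U12.
        split; first by apply: (kc_FO kS Kv).
        have [//|U2v] := FsU v Kv h1.
        by exfalso; apply: h2.
    have := qu.2 _ _ kT (conj Osy (BU1 _ By)); move=> [_ U1u].
    have B'u : B' u by split => // Ou; apply: nBu; rewrite BO1.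
    have : (U1 `&` U2) u by split => //; apply: B'U2.
    by rewrite U12.
  have B'y : B' y by split => // Oy; apply: nBy; rewrite BO1.
  have kT : kclopen K (Os `&` U2) (Fs `&` ~` U1).
    have [p1 c1 _] := kS; split.
    - exact: openI.
    - by apply: closedI => //; exact: open_closedC.
    - apply/seteqP; split => v [Kv [h1 h2]]; split => //.
        split; first by apply: (kc_OF kS Kv).
        by move=> U1v; have : (U1 `&` U2) v by []; rewrite U12.
      split; first by apply: (kc_FO kS Kv).
      have [U1v|//] := FsU v Kv h1.
      by exfalso; apply: h2.
  have qb : qc b by move: Bb; rewrite BO1 => -[].
  have := qb.2 _ _ kT (conj Osy (B'U2 _ B'y)); move=> [_ U2b].
  have : (U1 `&` U2) b by split => //; apply: BU1.
  by rewrite U12.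
have [x qcx] := hd (ex_intro _ y qcy) conn.
have qc1 : forall u, qc u -> u = y.
  move=> u qu; have h1 : [set x] u by rewrite -qcx.
  have h2 : [set x] y by rewrite -qcx.
  by rewrite h1 h2.
have : forall k, exists OF : set X * set X, [/\ kclopen K OF.1 OF.2, OF.1 y &
    Kc k -> ~ OF.2 k].
  move=> k; have [Kck|nKck] := pselect (Kc k); last by exists (setT, setT); split => //; exact: kclopenT.
  have nqk : ~ qc k by move=> /qc1 ky; apply: nKcy; rewrite -ky.
  have [ Op [Fc [kOF Oy nOk]]] : exists Op Fc, [/\ kclopen K Op Fc, Op y & ~ Op k].
    apply: contrapT => hn; apply: nqk; split; first exact: KcK.
    move=> Op Fc kOF Oy; apply: contrapT => nOk; apply: hn; by exists Op, Fc.
  exists (Op, Fc); split => // _ Fk; apply: nOk.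
  by apply: (kc_FO kOF (KcK _ Kck)).
move=> /choice [g hg].
have cKc' : compact Kc by apply: (subclosed_compact cKc cK).
have [s hs] := @fin_cover _ Kc (fun r => ~` (g r).2) cKc'
  (fun r Rr => let: And3 k _ h := hg r in
    conj (closed_openC (let: And3 _ c _ := k in c)) (h Rr)).
have kS := @kclopen_fin K _ s g (fun r => let: And3 k _ _ := hg r in k).
exists [set v | forall i, i \in s -> (g i).1 v], [set v | forall i, i \in s -> (g i).2 v].
split => //; first by move=> r _; have [] := hg r.
move=> k Kck Ok.
have [r rs [_ nFr]] := hs k Kck.
by apply: nFr; exact: (kc_OF kS (KcK _ Kck) Ok r rs).
Qed.

End ZD.

Lemma closure_min (Y : topologicalType) (L F : set Y) : closed F -> L `<=` F -> closure L `<=` F.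
Proof.
move=> cF LF; have := closureS LF; by rewrite -(closure_id F).1.
Qed.

Lemma open_nbhs_closure (Y : topologicalType) (L V : set Y) x :
  open V -> V x -> closure L x -> exists2 s, L s & V s.
Proof.
move=> oV Vx cx; have [s [Ls Vs]] := cx V (open_nbhs_nbhs (conj oV Vx)).
by exists s.
Qed.

Section Final.
Context {X : topologicalType}.
Hypothesis hX : hausdorff_space X.
Hypothesis hd : hereditarily_disconnected X.
Variable C : set (hyperspace X).
Hypothesis cC : connected C.
Variable T : hyperspace X.
Hypothesis CT : C T.
Hypothesis sT : scattered (sv T).
Local Notation H := (hyperspace X).
Local Notation Z := (Z C).
Local Notation sheaf := (sheaf C).
Implicit Types (G P Q : set (X * H)) (z w u : X * H).

Let sZ : sheaf Z := Z_sheaf C.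

Definition line z := forall w, cls Z z w -> w.1 = z.1.
Definition bad z := Z z /\ ~ line z.

Lemma bad_sat z w : bad z -> cls Z z w -> bad w.
Proof.
move=> [Zz nl] czw; split; first by case: czw.
move=> lw; apply: nl => u czu.
have cwz := cls_sym Zz czw.
have cwu := cls_trans cwz czu.
by rewrite (lw u cwu) -(lw z cwz).
Qed.

Lemma no_bad : ~ exists z, bad z.
Proof.
move=> hbad.
have [z0 [P [bz0 cP Pz0 hP]]] := iso_class hX cC sZ CT sT bad_sat (fun z (h : bad z) => proj1 h) hbad.
have Zz0 : Z z0 by case: bz0.
pose W0 := cls Z z0.
have W0P : W0 `<=` P by apply: cls_sub cP Pz0.
have W0Z : W0 `<=` Z by move=> w [].
have PZ : P `<=` Z by case: cP.
have sP : sheaf P := clopen_sheaf sZ cP.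
(* non-W0 points of P are lines *)
pose L := [set s | exists A, P (s, A) /\ ~ W0 (s, A)].
have hL : forall s, L s -> forall A, C A -> [/\ P (s, A), ~ W0 (s, A) & sv A s].
  move=> s [A0 [Ps nWs]] A CA.
  have Zw := PZ _ Ps.
  have lw : line (s, A0).
    apply: contrapT => nl; apply: nWs.
    exact: hP _ Ps (conj Zw nl).
  have [y cy] := cls_full cC sZ Zw CA.
  have ys : y = s := lw _ cy.
  subst y.
  have Ps' : P (s, A) by apply: (cls_sub cP Ps).
  have nW : ~ W0 (s, A).
    move=> W0s; apply: nWs.
    exact: cls_trans W0s (cls_sym Zw cy).
  by split => //; have [] := PZ _ Ps'.
have rig : forall x, closure L x -> forall A, C A -> sv A x.
  move=> x cx A CA; apply: (closure_min (@sv_closed _ hX A) _ cx) => s Ls.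
  by have [] := hL s Ls A CA.
have W0line : forall x A A', W0 (x, A) -> (forall A, C A -> sv A x) -> C A' -> W0 (x, A').
  move=> x A A' Wx rx CA'.
  have CA : C A by have [[]] := Wx.
  have := line_cls cC sZ (fun A2 CA2 => conj CA2 (rx A2 CA2)) CA CA'.
  exact: cls_trans Wx.
have sW0 : sheaf W0.
  split => //; last exact: cls_zclosed sZ.
  move=> [x A] Wz V oV Vx.
  have CA : C A by have [[]] := Wz.
  have [cLx|ncLx] := pselect (closure L x).
    exists setT; split => //; first exact: openT.
    by move=> A' CA' _; exists x => //; apply: (W0line x A) => //; exact: rig.
  have oV' : open (V `&` ~` closure L) by apply: openI => //; exact/closed_openC/closed_closure.
  have [Wn [oWn Wna h]] := (let: And3 _ l _ := sP in l) (x, A) (W0P _ Wz) _ oV' (conj Vx ncLx).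
  exists Wn; split => // A' CA' WA'.
  have [y [Vy ncy] Py] := h A' CA' WA'.
  exists y => //; apply: contrapT => nW; apply: ncy; apply: subset_closure.
  by exists A'.
have [z1 [P' [W0z1 cP' P'z1 hP']]] := @iso_class _ hX C cC W0 W0 T sW0 CT sT
  (fun z w _ c => proj1 c) (fun z h => h) (ex_intro _ z0 (cls_refl Zz0)).
pose I := cls W0 z1.
have IW0 : I `<=` W0 by move=> w [].
have cI : Gclopen W0 I.
  apply: (Gclopen_ext _ IW0 cP') => w Ww; split; first by move=> P'w; apply: hP'.
  by move=> Iw; apply: (cls_sub cP' P'z1).
have connI := cls_connected_image cI W0z1 (fun w h => h).
have neI : [set x | exists A, I (x, A)] !=set0.
  by exists z1.1; exists z1.2; rewrite -surjective_pairing; exact: cls_refl.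
have [y qIy] := hd neI connI.
have Iy : forall w, I w -> w.1 = y.
  move=> w Iw; have : [set y] w.1 by rewrite -qIy; exists w.2; case: w Iw.
  by [].
have Irig : forall A, C A -> I (y, A).
  move=> A CA; have [y' c] := cls_full cC sW0 W0z1 CA.
  by have := Iy _ c => /= yy; rewrite -yy.
have yrig : forall A, C A -> sv A y.
  by move=> A CA; have [_] := W0Z _ (IW0 _ (Irig A CA)).
pose R' := [set r | r <> y /\ forall A, C A -> W0 (r, A)].
have nyR : ~ closure R' y.
  move=> cy.
  have [_ _ oIc] := cI.
  have [V [Wn [oV Vy oWn WnT h]]] : nbhdp (y, T) (fun w => Z w -> ~ (W0 `\` I) w).
    have IyT := Irig T CT.
    have [V [Wn [oV Vy oWn WnT h]]] := (let: And3 _ oI _ := cI in oI) (y, T) (IW0 _ IyT) IyT.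
    exists V, Wn; split => // w Vw Ww Zw [W0w nIw].
    by apply: nIw; apply: h.
  have [r [ry rW] Vr] := open_nbhs_closure oV Vy cy.
  apply: (h (r, T)) => //=.
    by split => //; have [_] := W0Z _ (rW T CT).
  split; first exact: rW.
  by move=> /Iy /= ry'; apply: ry.
have RT : closure R' `<=` sv T.
  apply: closure_min; first exact: sv_closed.
  by move=> r [_ h]; have [_] := W0Z _ (h T CT).
have [Op [Fc [kOF Opy nOp]]] := zero_dim hX hd (@sv_compact _ T) (yrig T CT)
  (@closed_closure _ R') RT nyR.
pose Q := I `|` [set w | P w /\ ~ W0 w /\ Op w.1].
have cQ : Gclopen Z Q.
  have [p1 c1 _] := kOF.
  split.
  - move=> w [/IW0/W0Z //|[/PZ //]].
  - move=> w Zw [Iw|[Pw [nWw Opw]]].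
      have [_ oI _] := cI.
      have h1 := oI w (IW0 _ Iw) Iw.
      have [_ oP _] := cP.
      have h2 := oP w Zw (W0P _ (IW0 _ Iw)).
      have h3 : nbhdp w (fun u => Op u.1).
        exists Op, setT; split => //; [by rewrite (Iy _ Iw)|exact: openT].
      refine (nbhdpS (nbhdpI (nbhdpI h1 h2) h3) _).
      move=> u [[hu1 hu2] hu3] Zu; have Pu := hu2 Zu.
      have [Wu|nWu] := pselect (W0 u); first by left; apply: hu1.
      by right; split.
    have [_ oP _] := cP.
    have h2 := oP w Zw Pw.
    have h1 := cls_zclosed sZ Zw nWw.
    have h3 : nbhdp w (fun u => Op u.1).
      by exists Op, setT; split => //; exact: openT.
    refine (nbhdpS (nbhdpI (nbhdpI h1 h2) h3) _).
    by move=> u [[hu1 hu2] hu3] Zu; right; split; [apply: hu2|split; [apply: hu1|]].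
  - move=> w Zw [_ nQw].
    have [Pw|nPw] := pselect (P w); last first.
      have [_ _ oPc] := cP.
      refine (nbhdpS (oPc w Zw (conj Zw nPw)) _).
      move=> u h Zu; split => // -[/IW0/W0P Pu|[Pu _]]; by have [] := h Zu.
    have [Ww|nWw] := pselect (W0 w); last first.
      have nOw : ~ Op w.1 by move=> Ow; apply: nQw; right.
      have Lw : L w.1 by exists w.2; rewrite -surjective_pairing; split.
      have Tw : sv T w.1 by have [] := hL _ Lw T CT.
      have nFw : ~ Fc w.1 by move=> Fw; apply: nOw; exact: (kc_FO kOF Tw).
      have h1 := cls_zclosed sZ Zw nWw.
      have h3 : nbhdp w (fun u => ~ Fc u.1).
        by exists (~` Fc), setT; split => //; [exact: closed_openC|exact: openT].
      refine (nbhdpS (nbhdpI h1 h3) _).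
      move=> u [hu1 hu3] Zu; split => //; move=> [/IW0 Wu|[Pu [nWu Ou]]].
        by apply: (hu1 Zu).
      have Lu : L u.1 by exists u.2; rewrite -surjective_pairing; split.
      have Tu : sv T u.1 by have [] := hL u.1 Lu T CT.
      by apply: hu3; exact: (kc_OF kOF Tu Ou).
    have nIw : ~ I w by move=> Iw; apply: nQw; left.
    have [_ _ oIc] := cI.
    have h1 := oIc w Ww (conj Ww nIw).
    case: w Zw nQw Pw Ww nIw h1 => x A Zw nQw Pw Ww nIw h1.
    have [cx|ncx] := pselect (closure (L `&` Op) x); last first.
      have h3 : nbhdp (x, A) (fun u => ~ closure (L `&` Op) u.1).
        by exists (~` closure (L `&` Op)), setT; split => //;
          [exact/closed_openC/closed_closure|exact: openT].
      refine (nbhdpS (nbhdpI h1 h3) _).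
      move=> u [hu1 hu3] Zu; split => //; move=> [Iu|[Pu [nWu Ou]]].
        by have [] := hu1 (IW0 _ Iu).
      apply: hu3; apply: subset_closure; split => //.
      by exists u.2; rewrite -surjective_pairing; split.
    exfalso.
    have cLx : closure L x by apply: (closureS _ cx) => s [].
    have rx := rig x cLx.
    have Tx : sv T x.
      have : closure (L `&` Op) `<=` sv T `&` Fc.
        apply: closure_min; first by apply: closedI => //; exact: sv_closed.
        move=> s [Ls Os]; have Ts : sv T s by have [] := hL s Ls T CT.
        by split => //; exact: (kc_OF kOF Ts).
      by move=> /(_ x cx) [].
    have Fx : Fc x.
      have : closure (L `&` Op) `<=` sv T `&` Fc.
        apply: closure_min; first by apply: closedI => //; exact: sv_closed.
        move=> s [Ls Os]; have Ts : sv T s by have [] := hL s Ls T CT.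
        by split => //; exact: (kc_OF kOF Ts).
      by move=> /(_ x cx) [].
    have Ox : Op x by exact: (kc_FO kOF Tx Fx).
    have xy : x <> y.
      move=> xy; apply: nIw; rewrite xy; apply: Irig; by have [[]] := Ww.
    apply: (nOp x) => //; apply: subset_closure; split => // A' CA'.
    exact: (W0line x A).
have Qz1 : Q z1 by left; exact: cls_refl.
have lz0 : line z0.
  move=> w cw.
  have Zw : Z w by case: cw.
  have c1 : cls Z z1 w := cls_trans (cls_sym Zz0 W0z1) cw.
  have Qw : Q w by apply: (cls_sub cQ Qz1).
  have Iw : I w by case: Qw => // -[_ []].
  have Iz0 : Q z0 by apply: (cls_sub cQ Qz1); exact: cls_sym Zz0 W0z1.
  have Iz0' : I z0 by case: Iz0 => // -[_ [nW _]]; exfalso; apply: nW; exact: (cls_refl Zz0).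
  by rewrite (Iy _ Iw) (Iy _ Iz0').
by case: bz0.
Qed.

End Final.

Unset Implicit Arguments. Set Strict Implicit. Set Printing Implicit Defensive.

Theorem theorem5p9 (X : topologicalType) (hX : hausdorff_space X)
  (hd : hereditarily_disconnected X) (C : set (hyperspace X)) :
  connected C ->
  (exists T : hyperspace X, C T /\ scattered (proj1_sig T)) ->
  exists A : hyperspace X, C = [set A].
Proof.
move=> cC [T [CT sT]]; exists T.
have nb := no_bad hX hd cC CT sT.
have la : forall z, Z C z -> line C z.
  by move=> z Zz; apply: contrapT => nl; apply: nb; exists z; split.
have sZ := Z_sheaf C.
have eqv : forall A, C A -> sv A = sv T.
  move=> A CA; apply/seteqP; split => y hy.
    have Zz : Z C (y, A) by split.
    have [t ct] := cls_full cC sZ Zz CT.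
    have := la _ Zz _ ct => /= ty; rewrite -ty.
    by have [_] := ct.1.
  have Zz : Z C (y, T) by split.
  have [t ct] := cls_full cC sZ Zz CA.
  have := la _ Zz _ ct => /= ty; rewrite -ty.
  by have [_] := ct.1.
apply/seteqP; split => A.
  move=> CA; have := eqv A CA; rewrite /=.
  by case: A CA => a pa CA; case: T CT sT eqv la nb => t pt CT sT eqv la nb /= e; apply: eq_exist.
by move=> ->.
Qed.
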